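(* Let $G$ be a non-trivial graph with $m$ edges, maximum degree $\Delta$ and minimum degree $\delta$. Then $$ GA_1(\mathcal{L}(G)) \ge \min \Big\{ \, \frac{1}{4(\Delta-1)} \,,\, \frac{\sqrt{ (\Delta-1)(\delta-1)}}{(\Delta+\delta-2)^2} \, \Big\} \big(4m - 4M_1(G) +2 M_2(G) + F(G)\big) . $$
   Context: All graphs are finite and simple. A graph is non-trivial if each of its connected components has at least two edges. $d_u$ is the degree of $u$. $M_1(G)=\sum_{u\in V(G)}d_u^2$, $M_2(G)=\sum_{uv\in E(G)}d_ud_v$, $F(G)=\sum_{u\in V(G)}d_u^3$ (forgotten index), and $GA_1(G)=\sum_{uv\in E(G)}\frac{\sqrt{d_ud_v}}{\frac12(d_u+d_v)}$. The line graph $\mathcal{L}(G)$ has vertex set $E(G)$, two vertices being adjacent iff the corresponding edges share an end vertex in $G$. *)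

(* Defs.v *)
From HB Require Import structures.
From mathcomp Require Import all_boot all_order all_algebra.
Set Implicit Arguments. Unset Strict Implicit. Unset Printing Implicit Defensive.
Import Order.TTheory GRing.Theory Num.Theory.
Local Open Scope ring_scope.

(* A finite simple graph is a symmetric irreflexive relation e on a finType T. *)

Definition deg (T : finType) (e : rel T) (x : T) : nat := #|[set y | e x y]|.

Definition edge_set (T : finType) (e : rel T) : {set {set T}} :=
  [set [set p.1; p.2] | p in [set p : T * T | e p.1 p.2]].

Definition nedges (T : finType) (e : rel T) : nat := #|edge_set e|.

Definition nontrivial (T : finType) (e : rel T) : Prop :=
  forall x : T,
    (1 < #|[set f in edge_set e | f \subset [set y | connect e x y]]|)%N.

Definition M1 (T : finType) (e : rel T) : nat := \sum_(x : T) deg e x ^ 2.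
Definition Fidx (T : finType) (e : rel T) : nat := \sum_(x : T) deg e x ^ 3.
(* each edge f = {u,v} has exactly two elements, so the product is d_u d_v *)
Definition M2 (T : finType) (e : rel T) : nat :=
  \sum_(f in edge_set e) \prod_(x in f) deg e x.

Definition GA1 (R : rcfType) (T : finType) (e : rel T) : R :=
  \sum_(f in edge_set e)
     Num.sqrt (\prod_(x in f) (deg e x)%:R) / ((\sum_(x in f) (deg e x)%:R) / 2).

Definition line_vertex (T : finType) (e : rel T) := {f : {set T} | f \in edge_set e}.
Definition line_rel (T : finType) (e : rel T) : rel (line_vertex e) :=
  fun f g => (val f != val g) && ~~ [disjoint val f & val g].
Arguments line_rel {T} e.
Arguments GA1 R {T} e.

(* Main.v *)
Require Import Defs.
From HB Require Import structures.
From mathcomp Require Import all_boot all_order all_algebra.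
From mathcomp Require Import ring lra.
Set Implicit Arguments. Unset Strict Implicit. Unset Printing Implicit Defensive.
Import Order.TTheory GRing.Theory Num.Theory.
Local Open Scope ring_scope.

Section DC.
Variables (T : finType) (e : rel T).
Hypotheses (Hsym : symmetric e) (Hirr : irreflexive e).

Lemma set2_eqP (x y a b : T) : x != y -> a != b ->
  ([set x; y] == [set a; b]) = ((x, y) == (a, b)) || ((x, y) == (b, a)).
Proof.
move=> nxy nab; apply/idP/idP.
  move/eqP=> E.
  have xin : x \in [set a; b] by rewrite -E set21.
  have yin : y \in [set a; b] by rewrite -E set22.
  move: xin yin nxy; rewrite !in_set2 => /orP[]/eqP-> /orP[]/eqP->;
    by rewrite ?eqxx ?orbT.
by case/orP=> /eqP[-> ->]; rewrite // setUC.
Qed.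

Lemma edge_setP f : reflect (exists2 p : T * T, e p.1 p.2 & f = [set p.1; p.2]) (f \in edge_set e).
Proof.
apply: (iffP imsetP) => -[p Hp ->]; exists p => //; first by rewrite inE in Hp.
by rewrite inE.
Qed.

Lemma neq_of_e x y : e x y -> x != y.
Proof. by apply: contraTneq => ->; rewrite Hirr. Qed.

Lemma dcount (V : nmodType) (F : {set T} -> V) :
  (\sum_(f in edge_set e) F f) *+ 2 = \sum_x \sum_(y | e x y) F [set x; y].
Proof.
rewrite (pair_big_dep xpredT (fun x y => e x y) (fun x y => F [set x; y])) /=.
rewrite (partition_big (fun p : T * T => [set p.1; p.2]) (mem (edge_set e))) /=;
  last first.
  by move=> p Hp; apply/edge_setP; exists p.
rewrite -sumrMnl; apply: eq_bigr => f /edge_setP [[a b] /= Eab ->].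
rewrite (eq_bigr (fun _ => F [set a; b])); last by move=> p /andP[_ /eqP ->].
rewrite sumr_const; congr (_ *+ _).
have nab := neq_of_e Eab.
transitivity #|[set (a, b); (b, a)]|.
  rewrite cards2; suff -> : ((a, b) != (b, a)) by [].
  by apply: contra nab => /eqP[->].
apply: eq_card => -[x y]; rewrite !inE -topredE /=.
case Exy: (e x y) => /=; last first.
  apply/negbTE; apply/negP => /orP[]/eqP[??]; subst; first by rewrite Eab in Exy.
  by rewrite Hsym Eab in Exy.
by rewrite set2_eqP // neq_of_e.
Qed.

Lemma sum_nbr (V : nmodType) x (c : V) : \sum_(y | e x y) c = c *+ deg e x.
Proof.
rewrite (eq_bigl (mem [set y | e x y])) ?sumr_const // => y.
by rewrite !inE.
Qed.

Lemma sum_swap (V : nmodType) (G : T -> V) :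
  \sum_x \sum_(y | e x y) G y = \sum_x \sum_(y | e x y) G x.
Proof.
rewrite (exchange_big_dep xpredT) //=; apply: eq_bigr => x _.
by apply: eq_bigl => y; rewrite Hsym.
Qed.

Lemma sum_set2 (V : nmodType) (G : T -> V) x y : x != y ->
  \sum_(z in [set x; y]) G z = G x + G y.
Proof. by move=> nxy; rewrite big_setU1 ?big_set1 // inE. Qed.

Lemma prod_set2 (V : comPzSemiRingType) (G : T -> V) x y : x != y ->
  \prod_(z in [set x; y]) G z = G x * G y.
Proof. by move=> nxy; rewrite big_setU1 ?big_set1 // inE. Qed.

Lemma mulr2n_inj (R : numDomainType) (x y : R) : x *+ 2 = y *+ 2 -> x = y.
Proof. by move/eqP; rewrite eqrMn2r => /eqP. Qed.

Lemma edges_at (R : numDomainType) x :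
  \sum_(f in edge_set e) ((x \in f)%:R : R) = (deg e x)%:R.
Proof.
apply: mulr2n_inj; rewrite dcount.
transitivity (\sum_z \sum_(y | e z y) (((z == x)%:R : R) + (y == x)%:R)).
  apply: eq_bigr => z _; apply: eq_bigr => y Hzy.
  have nzy := neq_of_e Hzy.
  rewrite in_set2 (eq_sym x z) (eq_sym x y).
  case: (z =P x) => [zx|_]; case: (y =P x) => [yx|_] //=.
  - by move: nzy; rewrite zx yx eqxx.
  - by rewrite addr0.
  - by rewrite add0r.
  - by rewrite addr0.
under eq_bigr do rewrite big_split /=.
rewrite big_split /= sum_swap -mulr2n; congr (_ *+ 2).
under eq_bigr do rewrite sum_nbr.
rewrite (bigD1 x) //= eqxx big1 ?addr0 // => z /negbTE ->.
by rewrite mul0rn.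
Qed.
End DC.

Section LG.
Variables (T : finType) (e : rel T).
Hypotheses (Hsym : symmetric e) (Hirr : irreflexive e).

Lemma line_sym : symmetric (line_rel e).
Proof. by move=> f g; rewrite /line_rel eq_sym disjoint_sym. Qed.

Lemma line_irr : irreflexive (line_rel e).
Proof. by move=> f; rewrite /line_rel eqxx. Qed.

Lemma sum_LV (V : nmodType) (G : {set T} -> V) :
  \sum_(g : line_vertex e) G (val g) = \sum_(f in edge_set e) G f.
Proof.
rewrite -(big_imset _ (in2W val_inj)) /=.
apply: eq_bigl => f; apply/imsetP/idP => [[h _ ->]|Hf]; first exact: valP.
by exists (exist _ f Hf).
Qed.

Lemma claim (R : numDomainType) (g f : {set T}) : g \in edge_set e -> f \in edge_set e ->
  ((g != f) && ~~ [disjoint g & f])%:R + ((g == f)%:R *+ 2) =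
  \sum_(x in g) ((x \in f)%:R : R).
Proof.
move=> /edge_setP [[u v] /= Euv ->] /edge_setP [[a b] /= Eab ->].
have nuv := neq_of_e Hirr Euv; have nab := neq_of_e Hirr Eab.
rewrite sum_set2 //.
case Hu: (u \in [set a; b]); case Hv: (v \in [set a; b]).
- have -> : [set u; v] == [set a; b].
    rewrite eqEcard !cards2 nuv nab leqnn andbT.
    by apply/subsetP => x; rewrite in_set2 => /orP[]/eqP->.
  by rewrite /= add0r mulr2n.
- have -> : ([set u; v] == [set a; b]) = false.
    by apply/negbTE; apply: contraFneq Hv => <-; rewrite set22.
  have -> : ~~ [disjoint [set u; v] & [set a; b]].
    by apply/negP => /disjointFr /(_ (set21 u v)); rewrite Hu.
  by rewrite /= mul0rn.
- have -> : ([set u; v] == [set a; b]) = false.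
    by apply/negbTE; apply: contraFneq Hu => <-; rewrite set21.
  have -> : ~~ [disjoint [set u; v] & [set a; b]].
    by apply/negP => /disjointFr /(_ (set22 u v)); rewrite Hv.
  by rewrite /= mul0rn ?addr0 ?add0r.
- have -> : ([set u; v] == [set a; b]) = false.
    by apply/negbTE; apply: contraFneq Hu => <-; rewrite set21.
  have -> : [disjoint [set u; v] & [set a; b]].
    by rewrite disjoint_subset; apply/subsetP => x; rewrite in_set2 => /orP[]/eqP->; rewrite inE /= ?Hu ?Hv.
  by rewrite /= mul0rn ?addr0 ?add0r.
Qed.

Lemma LD (R : numDomainType) (g : line_vertex e) :
  ((deg (line_rel e) g)%:R : R) + 2 = \sum_(x in val g) ((deg e x)%:R).
Proof.
have -> : ((deg (line_rel e) g)%:R : R) = \sum_(h | line_rel e g h) 1 by rewrite sum_nbr.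
rewrite big_mkcond /=.
rewrite (eq_bigr (fun h => (((val g != val h) && ~~ [disjoint val g & val h])%:R : R))); last first.
  by move=> h _; rewrite /line_rel; case: (_ && _).
rewrite (sum_LV (fun f => (((val g != f) && ~~ [disjoint val g & f])%:R : R))).
have Hg := valP g.
have -> : (2 : R) = \sum_(f in edge_set e) (((val g == f)%:R : R) *+ 2).
  rewrite (bigD1 (val g)) //= eqxx big1 ?addr0 // => f /andP[_].
  by rewrite eq_sym => /negbTE ->; rewrite mul0rn.
rewrite -big_split /=.
rewrite (eq_bigr _ (fun f Hf => claim R Hg Hf)).
rewrite exchange_big /=.
apply: eq_bigr => x _; exact: edges_at.
Qed.
End LG.

Section SI.
Variables (T : finType) (e : rel T).
Hypotheses (Hsym : symmetric e) (Hirr : irreflexive e).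

Lemma S_ident (R : numFieldType) :
  (4 * (nedges e)%:R - 4 * (M1 e)%:R + 2 * (M2 e)%:R + (Fidx e)%:R : R)
  = \sum_(f in edge_set e) ((\sum_(x in f) ((deg e x)%:R : R)) - 2) ^+ 2.
Proof.
pose d x : R := (deg e x)%:R.
pose G x : R := d x ^+ 2 - 4 * d x + 2.
have hm : ((nedges e)%:R : R) *+ 2 = \sum_x d x.
  have := dcount Hsym Hirr (fun _ => (1 : R)).
  rewrite sumr_const => ->.
  by apply: eq_bigr => x _; rewrite sum_nbr.
have hM2 : ((M2 e)%:R : R) *+ 2 = \sum_x \sum_(y | e x y) (d x * d y).
  rewrite /M2 natr_sum.
  under eq_bigr do rewrite natr_prod.
  rewrite dcount //; apply: eq_bigr => x _; apply: eq_bigr => y Hxy.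
  by rewrite prod_set2 // (neq_of_e Hirr).
have hM1 : ((M1 e)%:R : R) = \sum_x d x ^+ 2.
  by rewrite /M1 natr_sum; apply: eq_bigr => x _; rewrite natrX.
have hF : ((Fidx e)%:R : R) = \sum_x d x ^+ 3.
  by rewrite /Fidx natr_sum; apply: eq_bigr => x _; rewrite natrX.
apply: mulr2n_inj; rewrite dcount //.
transitivity (\sum_x \sum_(y | e x y) (G x + G y + 2 * (d x * d y))).
  2: apply: eq_bigr => x _; apply: eq_bigr => y Hxy.
  2: by rewrite sum_set2 ?(neq_of_e Hirr) // /G; ring.
under eq_bigr do rewrite big_split /= big_split /=.
rewrite big_split big_split /= (sum_swap Hsym G).
under eq_bigr do rewrite sum_nbr.
under [X in _ = _ + _ + X]eq_bigr do rewrite -mulr_sumr.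
rewrite -mulr_sumr -hM2.
have -> : \sum_x G x *+ deg e x = \sum_x d x ^+ 3 - 4 * \sum_x d x ^+ 2 + 2 * \sum_x d x.
  rewrite mulr_sumr mulr_sumr -sumrB -big_split /=.
  by apply: eq_bigr => x _; rewrite -mulr_natr /G /d; ring.
rewrite -hF -hM1 -hm.
rewrite !mulr2n; ring.
Qed.
End SI.

Lemma poly1 (R : realFieldType) (a b H : R) : 0 < a -> a <= b -> b <= H ->
  H * (a + b) ^+ 4 <= b * (a + H) ^+ 4.
Proof.
move=> a0 ab bH.
set X := a + H; set Y := a + b.
have XY : Y <= X by rewrite /X /Y lerD2l.
have Y0 : 0 <= Y by rewrite /Y; lra.
have Q0 : 0 <= X * Y * (X^+2 + X * Y + Y^+2) - a * (X + Y) * (X^+2 + Y^+2).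
  have h1 : 0 <= X^+3 * Y + X^+2 * Y^+2 + X * Y^+3 - Y^+4.
    have : Y^+4 <= X^+3 * Y.
      rewrite exprS [_ * Y]mulrC ler_wpM2l //.
      by rewrite ler_pXn2r // ?nnegrE //; lra.
    have : 0 <= X^+2 * Y^+2 + X * Y^+3 by apply: addr_ge0; apply: mulr_ge0 => //; rewrite ?exprn_ge0 //; lra.
    lra.
  have h2 : 0 <= (b - a) * (X + Y) * (X^+2 + Y^+2).
    apply: mulr_ge0; [apply: mulr_ge0; lra|]; apply: addr_ge0; apply: sqr_ge0.
  have -> : X * Y * (X^+2 + X * Y + Y^+2) - a * (X + Y) * (X^+2 + Y^+2)
    = ((X^+3 * Y + X^+2 * Y^+2 + X * Y^+3 - Y^+4) + (b - a) * (X + Y) * (X^+2 + Y^+2)) / 2.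
    by rewrite /X /Y; field.
  by apply: divr_ge0 => //; lra.
rewrite -subr_ge0.
have -> : b * X ^+ 4 - H * Y ^+ 4 = (X - Y) * (X * Y * (X^+2 + X * Y + Y^+2) - a * (X + Y) * (X^+2 + Y^+2)).
  rewrite /X /Y; ring.
apply: mulr_ge0 => //; lra.
Qed.

Lemma poly2 (R : realFieldType) (a H : R) : 0 < H -> H <= 3 * a -> a <= H ->
  (a + H) ^+ 4 <= 16 * a * H ^+ 3.
Proof.
move=> H0 Ha aH; rewrite -subr_ge0.
have -> : 16 * a * H ^+ 3 - (a + H) ^+ 4 = (H - a) * (a^+3 + 5 * a^+2 * H + H^+2 * (11 * a - H)) by ring.
have a0 : 0 <= a by lra.
apply: mulr_ge0; first lra.
apply: addr_ge0; [apply: addr_ge0|].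
- exact: exprn_ge0.
- by apply: mulr_ge0; [apply: mulr_ge0; [lra| exact: exprn_ge0] | lra].
- by apply: mulr_ge0; [exact: sqr_ge0 | lra].
Qed.

Lemma poly3 (R : realFieldType) (a L H : R) : 0 < L -> L <= a -> 3 * a <= H ->
  L * (a + H) ^+ 4 <= a * (L + H) ^+ 4.
Proof.
move=> L0 La aH; rewrite -subr_ge0.
set X := a + H; set Y := L + H.
have -> : a * Y ^+ 4 - L * X ^+ 4 = (X - Y) * (H * (X + Y) * (X^+2 + Y^+2) - X * Y * (X^+2 + X * Y + Y^+2)).
  by rewrite /X /Y; ring.
apply: mulr_ge0; first by rewrite /X /Y; lra.
set s := X + Y; set P := X * Y.
have -> : H * (X + Y) * (X^+2 + Y^+2) - X * Y * (X^+2 + X * Y + Y^+2)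
   = s^+3 * (8 * H - 3 * s) / 16 + ((X - Y)^+2 / 4) * (2 * H * s + s^+2 / 2 + (X - Y)^+2 / 4).
  by rewrite /s /P; field.
have s0 : 0 <= s by rewrite /s /X /Y; lra.
apply: addr_ge0.
  apply: divr_ge0; last lra.
  apply: mulr_ge0; first exact: exprn_ge0.
  by rewrite /s /X /Y; lra.
apply: mulr_ge0; first by apply: divr_ge0; [exact: sqr_ge0 | lra].
apply: addr_ge0; first apply: addr_ge0.
- by apply: mulr_ge0 => //; lra.
- by apply: divr_ge0; [exact: sqr_ge0 | lra].
- by apply: divr_ge0; [exact: sqr_ge0 | lra].
Qed.

Lemma key_sq_le (R : realFieldType) (p q c a b : R) : 0 < q -> q <= p -> 0 <= c ->
  4 * p * c <= 1 -> c ^+ 2 * (p + q) ^+ 4 <= p * q ->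
  2 * q <= a -> a <= b -> b <= 2 * p ->
  c ^+ 2 * (a + b) ^+ 4 <= 4 * (a * b).
Proof.
move=> q0 qp c0 h1 h2 qa ab bp.
have p0 : 0 < p by lra.
have a0 : 0 < a by lra.
have P1 := poly1 a0 ab bp.
have sab : 0 <= (a + b) ^+ 4 by apply: exprn_ge0; lra.
have c20 : 0 <= c ^+ 2 by exact: sqr_ge0.
have ab0 : 0 <= a * b by apply: mulr_ge0; lra.
have pc1 : (4 * p * c) ^+ 2 <= 1.
  have : 0 <= 4 * p * c by apply: mulr_ge0 => //; lra.
  move=> h0; rewrite expr2; have := ler_pM h0 h0 h1 h1; by rewrite mulr1.
case: (lerP (2 * p) (3 * a)) => Ha.
  have P2 := poly2 (a := a) (H := 2 * p) ltac:(lra) Ha (le_trans ab bp).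
  have E1 : (a + b) ^+ 4 <= 16 * (a * b) * (2 * p) ^+ 2.
    have : 2 * p * (a + b) ^+ 4 <= 2 * p * (16 * (a * b) * (2 * p) ^+ 2).
      apply: (le_trans P1).
      have -> : 2 * p * (16 * (a * b) * (2 * p) ^+ 2) = b * (16 * a * (2 * p) ^+ 3) by ring.
      by apply: ler_wpM2l => //; lra.
    by rewrite ler_pM2l //; lra.
  apply: (le_trans (ler_wpM2l c20 E1)).
  have -> : c ^+ 2 * (16 * (a * b) * (2 * p) ^+ 2) = 4 * (a * b) * (4 * p * c) ^+ 2 by ring.
  have := ler_wpM2l (x := 4 * (a * b)) ltac:(lra) pc1; by rewrite mulr1.
have P3 := poly3 (a := a) (L := 2 * q) (H := 2 * p) ltac:(lra) qa ltac:(lra).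
have E2 : p * q * (a + b) ^+ 4 <= 4 * (a * b) * (p + q) ^+ 4.
  have : 4 * (p * q) * (a + b) ^+ 4 <= 4 * (4 * (a * b) * (p + q) ^+ 4).
    have -> : 4 * (p * q) * (a + b) ^+ 4 = 2 * q * (2 * p * (a + b) ^+ 4) by ring.
    apply: (le_trans (ler_wpM2l (x := 2 * q) ltac:(lra) P1)).
    have -> : 2 * q * (b * (a + 2 * p) ^+ 4) = b * (2 * q * (a + 2 * p) ^+ 4) by ring.
    apply: (le_trans (ler_wpM2l (x := b) ltac:(lra) P3)).
    by rewrite le_eqVlt; apply/orP; left; apply/eqP; ring.
  rewrite -mulrA ler_pM2l //; lra.
have pq0 : 0 < p * q by apply: mulr_gt0.
rewrite -(ler_pM2l pq0).
apply: (le_trans (y := c ^+ 2 * (4 * (a * b) * (p + q) ^+ 4))).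
  have -> : p * q * (c ^+ 2 * (a + b) ^+ 4) = c ^+ 2 * (p * q * (a + b) ^+ 4) by ring.
  exact: ler_wpM2l.
have -> : c ^+ 2 * (4 * (a * b) * (p + q) ^+ 4) = 4 * (a * b) * (c ^+ 2 * (p + q) ^+ 4) by ring.
have -> : p * q * (4 * (a * b)) = 4 * (a * b) * (p * q) by ring.
apply: ler_wpM2l => //; lra.
Qed.

Lemma term_le (R : rcfType) (D d : nat) (a b : R) :
  0 <= a -> 0 <= b ->
  2 * d%:R - 2 <= a -> a <= 2 * D%:R - 2 ->
  2 * d%:R - 2 <= b -> b <= 2 * D%:R - 2 ->
  Num.min (1 / (4 * (D%:R - 1)))
          (Num.sqrt ((D%:R - 1) * (d%:R - 1)) / (D%:R + d%:R - 2) ^+ 2) * (a + b)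
  <= Num.sqrt (a * b) / ((a + b) / 2).
Proof.
move=> a0 b0 la ua lb ub.
set c := Num.min _ _.
have rhs0 : 0 <= Num.sqrt (a * b) / ((a + b) / 2).
  by apply: divr_ge0; [exact: sqrtr_ge0 | lra].
case: (lerP c 0) => c0.
  apply: le_trans rhs0; rewrite mulr_le0_ge0 //; lra.
have [c1 c2] : c <= 1 / (4 * (D%:R - 1)) /\
   c <= Num.sqrt ((D%:R - 1) * (d%:R - 1)) / (D%:R + d%:R - 2) ^+ 2.
  by have := le_refl c; rewrite {2}/c le_min => /andP[].
set p : R := D%:R - 1; set q : R := d%:R - 1.
have p0 : 0 < p.
  have := lt_le_trans c0 c1; rewrite -/p.
  by rewrite mul1r invr_gt0 pmulr_rgt0 //; lra.
have q0 : 0 < q.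
  have := lt_le_trans c0 c2; rewrite -/p -/q.
  case: (lerP (Num.sqrt (p * q)) 0) => r0.
    have i0 : 0 <= ((D%:R + d%:R - 2) ^+ 2 : R)^-1 by rewrite invr_ge0 sqr_ge0.
    by move=> h; have := lt_le_trans h (mulr_le0_ge0 r0 i0); rewrite ltxx.
  by move=> _; move: r0; rewrite sqrtr_gt0 pmulr_rgt0.
have pq0 : 0 < p + q by apply: addr_gt0.
have h1 : 4 * p * c <= 1.
  move: c1; rewrite -/p ler_pdivlMr; last by rewrite mulr_gt0.
  by rewrite mulrC.
have h2 : c ^+ 2 * (p + q) ^+ 4 <= p * q.
  move: c2; rewrite -/p -/q (_ : D%:R + d%:R - 2 = p + q); last by rewrite /p /q; ring.
  rewrite ler_pdivlMr ?exprn_gt0 // => h.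
  have h0 : 0 <= c * (p + q) ^+ 2 by apply: mulr_ge0; [exact: ltW | exact: sqr_ge0].
  have := ler_pM h0 h0 h h.
  rewrite -!expr2 sqr_sqrtr; last by apply: mulr_ge0; exact: ltW.
  by rewrite exprMn -exprM.
have la' : 2 * q <= a by rewrite /q mulrBr mulr1.
have lb' : 2 * q <= b by rewrite /q mulrBr mulr1.
have ua' : a <= 2 * p by rewrite /p mulrBr mulr1.
have ub' : b <= 2 * p by rewrite /p mulrBr mulr1.
clearbody c p q.
clear la lb ua ub c1 c2 rhs0.
have hsq : c ^+ 2 * (a + b) ^+ 4 <= 4 * (a * b).
  have qp : q <= p by lra.
  have c0' := ltW c0.
  case: (lerP a b) => ab.
    exact: (key_sq_le q0 qp c0' h1 h2 la' ab ub').
  rewrite (addrC a b) (mulrC a b).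
  exact: (key_sq_le q0 qp c0' h1 h2 lb' (ltW ab) ua').
have ab0 : 0 < a + b by lra.
rewrite ler_pdivlMr; last lra.
rewrite -(ler_pXn2r (n := 2)) // ?nnegrE ?sqrtr_ge0 //; last first.
  apply: mulr_ge0; [apply: mulr_ge0; lra | lra].
rewrite sqr_sqrtr; last by apply: mulr_ge0.
have -> : (c * (a + b) * ((a + b) / 2)) ^+ 2 = c ^+ 2 * (a + b) ^+ 4 / 4 by field.
rewrite ler_pdivrMr; last lra.
by rewrite (mulrC (a * b)).
Qed.

Theorem proposition2p8 (R : rcfType) (T : finType) (e : rel T)
  (Hsym : symmetric e) (Hirr : irreflexive e) (Hnt : nontrivial e)
  (Delta delta : nat)
  (HDle : forall x : T, (deg e x <= Delta)%N) (HDex : exists x : T, deg e x = Delta)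
  (Hdge : forall x : T, (delta <= deg e x)%N) (Hdex : exists x : T, deg e x = delta) :
  Num.min (1 / (4 * (Delta%:R - 1)))
          (Num.sqrt ((Delta%:R - 1) * (delta%:R - 1)) / (Delta%:R + delta%:R - 2) ^+ 2)
    * (4 * (nedges e)%:R - 4 * (M1 e)%:R + 2 * (M2 e)%:R + (Fidx e)%:R)
  <= GA1 R (line_rel e).
Proof.
set c := Num.min _ _.
rewrite (S_ident Hsym Hirr R).
pose D (g : line_vertex e) : R := (deg (line_rel e) g)%:R.
have HS : \sum_(f in edge_set e) ((\sum_(x in f) ((deg e x)%:R : R)) - 2) ^+ 2
    = \sum_(g : line_vertex e) D g ^+ 2.
  rewrite -(sum_LV e (fun f : {set T} => ((\sum_(x in f) ((deg e x)%:R : R)) - 2) ^+ 2)).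
  by apply: eq_bigr => g _; rewrite -(LD Hsym Hirr R g) addrK.
rewrite HS.
have Dbnd g : 2 * delta%:R - 2 <= D g /\ D g <= 2 * Delta%:R - 2.
  have := LD Hsym Hirr R g.
  case/edge_setP: (valP g) => [[u v] /= Euv ->].
  rewrite sum_set2 ?(neq_of_e Hirr Euv) // => HD.
  have := HDle u; have := HDle v; have := Hdge u; have := Hdge v.
  rewrite -!(ler_nat R) => h1 h2 h3 h4.
  rewrite /D; split; lra.
have lsym := line_sym (e := e).
have lirr := line_irr (e := e).
have HS2 : (\sum_(g : line_vertex e) D g ^+ 2) *+ 2
    = \sum_g \sum_(h | line_rel e g h) (D g + D h).
  under [RHS]eq_bigr do rewrite big_split /=.
  rewrite big_split /= (sum_swap lsym D) -mulr2n; congr (_ *+ 2).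
  by apply: eq_bigr => g _; rewrite sum_nbr expr2 -mulr_natr.
have HGA : GA1 R (line_rel e) *+ 2
    = \sum_g \sum_(h | line_rel e g h) Num.sqrt (D g * D h) / ((D g + D h) / 2).
  rewrite /GA1 dcount //; apply: eq_bigr => g _; apply: eq_bigr => h Hgh.
  by rewrite prod_set2 ?sum_set2 ?(neq_of_e lirr Hgh).
rewrite -(ler_pMn2r (n := 2)) // -mulrnAr HS2 HGA mulr_sumr.
apply: ler_sum => g _; rewrite mulr_sumr; apply: ler_sum => h _.
have [lg ug] := Dbnd g; have [lh uh] := Dbnd h.
exact: term_le.
Qed.
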